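(* Let $p,q$ be positive integers and let $\Phi^*:V^*_{pq}(\mathbb{C})\to\mathbb{C}^{q\times p}$ be the map $\Phi^*\binom{Z_0}{Z_1}=Z_1Z_0^{-1}$, where $Z_0\in\mathbb{C}^{p\times p}$, $Z_1\in\mathbb{C}^{q\times p}$. Then the complex valued components of $\Phi^*$ constitute an orthogonal harmonic family of $\mathbf{GL}_p(\mathbb{C})$-invariant functions on $V^*_{pq}(\mathbb{C})$, equipped with the Euclidean metric.
   Context: $U^*_{pq}(\mathbb{C})=\{\binom{Z_0}{Z_1}\in\mathbb{C}^{(p+q)\times p}: Z_0^*Z_0+Z_1^*Z_1 \text{ invertible}\}$ and $V^*_{pq}(\mathbb{C})=\{\binom{Z_0}{Z_1}\in U^*_{pq}(\mathbb{C}): \det Z_0\neq0\}$. $\mathbf{GL}_p(\mathbb{C})$ acts by right multiplication. The Euclidean metric is $\langle X,Y\rangle=\mathfrak{Re}\,\mathrm{trace}(X^*Y)$. For a Riemannian manifold $(M,g)$ and complex functions $\phi,\psi$, $\tau(\phi)$ is the Laplace–Beltrami operator (extended complex-linearly) and $\kappa(\phi,\psi)=g(\mathrm{grad}\,\phi,\mathrm{grad}\,\psi)$ with $g$ extended complex-bilinearly. A set $\Omega$ of complex functions is an orthogonal harmonic family if $\tau(\phi)=0$ and $\kappa(\phi,\psi)=0$ for all $\phi,\psi\in\Omega$. *)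

(* Defs.v *)
From HB Require Import structures.
From mathcomp Require Import all_boot all_order all_algebra.
From mathcomp Require Import all_classical all_reals all_analysis.
From mathcomp Require Import complex.
Set Implicit Arguments. Unset Strict Implicit. Unset Printing Implicit Defensive.
Import Order.TTheory GRing.Theory Num.Theory.
Local Open Scope ring_scope.
Local Open Scope complex_scope.

Section Defs.
Variable R : realType.
Variables m n : nat.

(* A complex valued function on C^{m x n}, viewed as the real Euclidean
   space R^{2mn} with metric <X,Y> = Re tr(X^* Y). *)
Definition cfun := 'M[R[i]]_(m, n) -> R[i].

Definition cline (phi : cfun) (v Z : 'M[R[i]]_(m, n)) (t : R) : R[i] :=
  phi (Z + (t%:C) *: v).

Definition cderivable (phi : cfun) (v Z : 'M[R[i]]_(m, n)) : Prop :=
  derivable (fun t => @complex.Re R (cline phi v Z t)) 0 1 /\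
  derivable (fun t => @complex.Im R (cline phi v Z t)) 0 1.

Definition cdir (phi : cfun) (v : 'M[R[i]]_(m, n)) : cfun :=
  fun Z => Complex (derive1 (fun t => @complex.Re R (cline phi v Z t)) 0)
                  (derive1 (fun t => @complex.Im R (cline phi v Z t)) 0).

(* The orthonormal basis of (C^{m x n}, Re tr(X^* Y)):
   the E_ij (b = false) and i E_ij (b = true). *)
Definition onb (i : 'I_m) (j : 'I_n) (b : bool) : 'M[R[i]]_(m, n) :=
  (if b then 'i else 1) *: delta_mx i j.

(* tension field / Laplace-Beltrami operator (Euclidean metric),
   extended complex-linearly *)
Definition tau (phi : cfun) : cfun :=
  fun Z => \sum_(i < m) \sum_(j < n) \sum_(b : bool)
             cdir (cdir phi (onb i j b)) (onb i j b) Z.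

(* kappa(phi,psi) = g(grad phi, grad psi), g extended complex-bilinearly *)
Definition kappa (phi psi : cfun) : cfun :=
  fun Z => \sum_(i < m) \sum_(j < n) \sum_(b : bool)
             cdir phi (onb i j b) Z * cdir psi (onb i j b) Z.

Definition twice_cderivable (phi : cfun) (Z : 'M[R[i]]_(m, n)) : Prop :=
  forall i j b, cderivable phi (onb i j b) Z /\
                cderivable (cdir phi (onb i j b)) (onb i j b) Z.

Definition orthogonal_harmonic_family (D : set 'M[R[i]]_(m, n))
    (Omega : set cfun) : Prop :=
  (forall phi, Omega phi -> forall Z, D Z ->
      twice_cderivable phi Z /\ tau phi Z = 0) /\
  (forall phi psi, Omega phi -> Omega psi -> forall Z, D Z ->
      (forall i j b, cderivable phi (onb i j b) Z /\
                     cderivable psi (onb i j b) Z) /\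
      kappa phi psi Z = 0).
End Defs.

Section Grass.
Variable R : realType.
Variables p q : nat.

Definition Ustar : set 'M[R[i]]_(p + q, p) :=
  [set Z | let Z0 := usubmx Z in let Z1 := dsubmx Z in
           ((map_mx conjc Z0)^T *m Z0 + (map_mx conjc Z1)^T *m Z1) \in unitmx].

Definition Vstar : set 'M[R[i]]_(p + q, p) :=
  [set Z | Ustar Z /\ \det (usubmx Z) != 0].

Definition Phistar (Z : 'M[R[i]]_(p + q, p)) : 'M[R[i]]_(q, p) :=
  dsubmx Z *m invmx (usubmx Z).

Definition Phistar_components : set (cfun R (p + q) p) :=
  [set phi | exists (a : 'I_q) (b : 'I_p), phi = fun Z => Phistar Z a b].

Definition GL_invariant (D : set 'M[R[i]]_(p + q, p)) (phi : cfun R (p + q) p) :=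
  forall Z g, D Z -> g \in unitmx -> phi (Z *m g) = phi Z.
End Grass.

(* Main.v *)
Require Import Defs.
From HB Require Import structures.
From mathcomp Require Import all_boot all_order all_algebra.
From mathcomp Require Import all_classical all_reals all_analysis.
From mathcomp Require Import complex.
From mathcomp Require Import ring lra.
Set Implicit Arguments. Unset Strict Implicit. Unset Printing Implicit Defensive.
Import Order.TTheory GRing.Theory Num.Theory numFieldNormedType.Exports.
Local Open Scope ring_scope.
Local Open Scope classical_set_scope.
Local Open Scope complex_scope.

Section Tool.
Variable R : realType.

Definition HasD (g : R -> R[i]) (t : R) (v : R[i]) :=
  is_derive t 1 (fun s => complex.Re (g s)) (complex.Re v) /\
  is_derive t 1 (fun s => complex.Im (g s)) (complex.Im v).

Lemma ReM (x y : R[i]) : complex.Re (x * y) = complex.Re x * complex.Re y - complex.Im x * complex.Im y.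
Proof. by case: x => a b; case: y => c d. Qed.
Lemma ImM (x y : R[i]) : complex.Im (x * y) = complex.Re x * complex.Im y + complex.Im x * complex.Re y.
Proof. by case: x => a b; case: y => c d. Qed.
Lemma ReV (x : R[i]) : complex.Re (x^-1) = complex.Re x / (complex.Re x ^+ 2 + complex.Im x ^+ 2).
Proof. by case: x => a b. Qed.
Lemma ImV (x : R[i]) : complex.Im (x^-1) = - (complex.Im x / (complex.Re x ^+ 2 + complex.Im x ^+ 2)).
Proof. by case: x => a b. Qed.
Lemma ReD (x y : R[i]) : complex.Re (x + y) = complex.Re x + complex.Re y.
Proof. by case: x => a b; case: y => c d. Qed.
Lemma ImD (x y : R[i]) : complex.Im (x + y) = complex.Im x + complex.Im y.
Proof. by case: x => a b; case: y => c d. Qed.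
Lemma ReN (x : R[i]) : complex.Re (- x) = - complex.Re x.
Proof. by case: x => a b. Qed.
Lemma ImN (x : R[i]) : complex.Im (- x) = - complex.Im x.
Proof. by case: x => a b. Qed.

Lemma HasD_cst k t : HasD (fun _ => k) t 0.
Proof. split; exact: is_derive_cst. Qed.

Lemma HasD_id t : HasD (fun s => s%:C) t 1.
Proof. split; [exact: is_derive_id | exact: is_derive_cst]. Qed.

Lemma HasD_add g h t v w : HasD g t v -> HasD h t w -> HasD (fun s => g s + h s) t (v + w).
Proof.
move=> [g1 g2] [h1 h2]; split.
  have -> : (fun s => complex.Re (g s + h s)) = (fun s => complex.Re (g s)) + (fun s => complex.Re (h s)).
    by apply/funext => s; rewrite ReD.
  rewrite ReD; exact: is_deriveD.
have -> : (fun s => complex.Im (g s + h s)) = (fun s => complex.Im (g s)) + (fun s => complex.Im (h s)).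
  by apply/funext => s; rewrite ImD.
rewrite ImD; exact: is_deriveD.
Qed.

Lemma HasD_mul g h t v w : HasD g t v -> HasD h t w ->
  HasD (fun s => g s * h s) t (v * h t + g t * w).
Proof.
move=> [g1 g2] [h1 h2]; split.
  have -> : (fun s => complex.Re (g s * h s)) = (fun s => complex.Re (g s)) * (fun s => complex.Re (h s)) - (fun s => complex.Im (g s)) * (fun s => complex.Im (h s)).
    by apply/funext => s; rewrite ReM.
  apply: (is_derive_eq (is_deriveB (is_deriveM g1 h1) (is_deriveM g2 h2))).
  rewrite ReD !ReM /GRing.scale /=. ring.
have -> : (fun s => complex.Im (g s * h s)) = (fun s => complex.Re (g s)) * (fun s => complex.Im (h s)) + (fun s => complex.Im (g s)) * (fun s => complex.Re (h s)).
  by apply/funext => s; rewrite ImM.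
apply: (is_derive_eq (is_deriveD (is_deriveM g1 h2) (is_deriveM g2 h1))).
rewrite ImD !ImM /GRing.scale /=. ring.
Qed.
Lemma norm2_neq0 (x : R[i]) : x != 0 -> complex.Re x ^+ 2 + complex.Im x ^+ 2 != 0.
Proof.
case: x => a b /= H; apply/negP => /eqP E; move/negP: H; apply.
have : (a ^+ 2 == 0) && (b ^+ 2 == 0) by rewrite -paddr_eq0 ?sqr_ge0 // E.
by rewrite !expf_eq0 /= => /andP [/eqP -> /eqP ->].
Qed.

Lemma HasD_inv g t v : g t != 0 -> HasD g t v ->
  HasD (fun s => (g s)^-1) t (- v * (g t)^-1 * (g t)^-1).
Proof.
move=> gt0 [g1 g2].
have N1 := is_deriveD (is_deriveM g1 g1) (is_deriveM g2 g2).
pose nrm := fun s => complex.Re (g s) * complex.Re (g s) + complex.Im (g s) * complex.Im (g s).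
have nz : nrm t != 0 by rewrite /nrm -!expr2; exact: norm2_neq0.
have N3 := @is_deriveV R nrm t _ 1 nz N1.
split.
  have -> : (fun s => complex.Re ((g s)^-1)) = (fun s => complex.Re (g s)) *
     (fun s => (nrm s)^-1).
    by apply/funext => s; rewrite ReV /nrm !expr2.
  apply: (is_derive_eq (is_deriveM g1 N3)).
  rewrite !(ReM, ImM, ReN, ImN, ReV, ImV) /GRing.scale /= /nrm.
  have := norm2_neq0 gt0.
  move: (complex.Re (g t)) (complex.Im (g t)) (complex.Re v) (complex.Im v) => a b c d H.
  field. exact H.
have -> : (fun s => complex.Im ((g s)^-1)) = - ((fun s => complex.Im (g s)) *
     (fun s => (nrm s)^-1)).
  by apply/funext => s; rewrite ImV /nrm !expr2.
apply: (is_derive_eq (is_deriveN (is_deriveM g2 N3))).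
rewrite !(ReM, ImM, ReN, ImN, ReV, ImV) /GRing.scale /= /nrm.
have := norm2_neq0 gt0.
move: (complex.Re (g t)) (complex.Im (g t)) (complex.Re v) (complex.Im v) => a b c d H.
field. exact H.
Qed.
Lemma is_derive_shift0 (F : R -> R) (s d : R) : is_derive s (1:R) F d -> is_derive (0:R) (1:R) (fun t => F (s + t)) d.
Proof.
move=> [H1 H2].
have E : (fun h : R => h^-1 *: (((fun t => F (s+t)) \o shift 0) (h *: (1:R)) - F (s + 0))) =
         (fun h : R => h^-1 *: ((F \o shift s) (h *: (1:R)) - F s)).
  by apply/funext => h /=; rewrite !addr0 [s + _]addrC.
split; first by rewrite /derivable E.
by rewrite /derive E -H2.
Qed.

Lemma HasD_shift0 f s v : HasD f s v -> HasD (fun t => f (s + t)) 0 v.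
Proof. by move=> [H1 H2]; split; apply: (is_derive_shift0 (F := fun t => complex.Re (f t))) || apply: (is_derive_shift0 (F := fun t => complex.Im (f t))). Qed.

Lemma HasD_near (f g : R -> R[i]) (t : R) v : (\forall x \near (t : R), f x = g x) -> HasD f t v -> HasD g t v.
Proof.
move=> E [H1 H2]; split.
  by apply: near_eq_is_derive H1; apply: filterS E => x /= ->.
by apply: near_eq_is_derive H2; apply: filterS E => x /= ->.
Qed.

Lemma near_ball0 (s r : R) : `|s| < r -> \forall t \near (0:R), `|s + t| < r.
Proof.
move=> sr; apply/nbhs_ballP; exists (r - `|s|); first by rewrite /= subr_gt0.
move=> t; rewrite /ball /= sub0r normrN => H.
by apply: (le_lt_trans (ler_normD _ _)); rewrite -ltrBrDl.
Qed.
Lemma RcD (s t : R) : (s + t)%:C = s%:C + t%:C.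
Proof. by apply/eqP; rewrite eq_complex /= addr0 !eqxx. Qed.

Lemma HasD_cdir m n (phi : cfun R m n) v Z w :
  HasD (cline phi v Z) 0 w -> cderivable phi v Z /\ cdir phi v Z = w.
Proof.
move=> [[H1 H2] [H3 H4]]; split; first by split.
by rewrite /cdir !derive1E H2 H4; case: (w).
Qed.

Lemma line_lemma m n (phi : cfun R m n) (v Z : 'M[R[i]]_(m,n)) (f f1 : R -> R[i]) (r : R) (v2 : R[i]) :
  (forall t : R, `|t| < r -> phi (Z + t%:C *: v) = f t) ->
  (forall t, `|t| < r -> HasD f t (f1 t)) ->
  HasD f1 0 v2 -> 0 < r ->
  [/\ cderivable phi v Z, cdir phi v Z = f1 0, cderivable (cdir phi v) v Z & cdir (cdir phi v) v Z = v2].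
Proof.
move=> Ef Df D2 r0.
have key : forall s, `|s| < r -> HasD (cline phi v (Z + s%:C *: v)) 0 (f1 s).
  move=> s sr; apply: HasD_near (HasD_shift0 (Df s sr)).
  apply: filterS (near_ball0 sr) => t /= H.
  by rewrite /cline -addrA -scalerDl -RcD Ef.
have Z0 : Z + (0:R)%:C *: v = Z by rewrite scale0r addr0.
have r0' : `|0 : R| < r by rewrite normr0.
have [K1 K2] := HasD_cdir (key 0 r0'); rewrite Z0 in K1 K2.
have K3 : HasD (cline (cdir phi v) v Z) 0 v2.
  apply: HasD_near D2; apply: filterS (near_ball0 r0') => t /=; rewrite add0r => H.
  by rewrite /cline; case: (HasD_cdir (key t H)) => _ ->.
have [K4 K5] := HasD_cdir K3.
by split.
Qed.
Lemma HasD_eq g t v w : HasD g t v -> v = w -> HasD g t w.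
Proof. by move=> H <-. Qed.

Definition Gf (c x y pp d : R[i]) (t : R) : R[i] :=
  x + (t%:C * c) * y + (t%:C * c) * pp * (1 + (t%:C * c) * d)^-1.
Definition G1f (c y pp d : R[i]) (t : R) : R[i] :=
  c * y + c * pp * (1 + (t%:C * c) * d)^-1 * (1 + (t%:C * c) * d)^-1.

Lemma HasD_G c x y pp d t : 1 + (t%:C * c) * d != 0 ->
  HasD (Gf c x y pp d) t (G1f c y pp d t).
Proof.
move=> nz.
have A := HasD_mul (HasD_id t) (HasD_cst c t).
have U := HasD_add (HasD_cst 1 t) (HasD_mul A (HasD_cst d t)).
have I := HasD_inv nz U.
have T := HasD_add (HasD_add (HasD_cst x t) (HasD_mul A (HasD_cst y t)))
                   (HasD_mul (HasD_mul A (HasD_cst pp t)) I).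
apply: (HasD_eq T); rewrite /G1f.
field. exact: nz.
Qed.

Lemma HasD_G1 c y pp d : HasD (G1f c y pp d) 0 (- (2 * c ^+ 2 * pp * d)).
Proof.
have nz : 1 + ((0:R)%:C * c) * d != 0 by rewrite mul0r mul0r addr0 oner_neq0.
have A := HasD_mul (HasD_id 0) (HasD_cst c 0).
have U := HasD_add (HasD_cst 1 0) (HasD_mul A (HasD_cst d 0)).
have I := HasD_inv nz U.
have T := HasD_add (HasD_mul (HasD_cst c 0) (HasD_cst y 0))
             (HasD_mul (HasD_mul (HasD_mul (HasD_cst c 0) (HasD_cst pp 0)) I) I).
apply: (HasD_eq (g := G1f c y pp d) T); last first.
  have -> : (0:R)%:C = 0 by [].
  rewrite !mul0r !addr0 invr1; ring.
Qed.
End Tool.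
Section Mx.
Variable K : fieldType.

Lemma mul_mx_delta_E m n p (A : 'M[K]_(m,n)) k (j : 'I_p) r s :
  (A *m delta_mx k j) r s = A r k * (j == s)%:R.
Proof.
rewrite mxE (bigD1 k) //= big1 ?addr0; first by rewrite mxE eqxx eq_sym.
by move=> l /negPf H; rewrite mxE H /= mulr0.
Qed.

Lemma mul_delta_mx_E m n p (A : 'M[K]_(n,p)) (k : 'I_m) j r s :
  (delta_mx k j *m A) r s = (r == k)%:R * A j s.
Proof.
rewrite mxE (bigD1 j) //= big1 ?addr0; first by rewrite mxE eqxx andbT.
by move=> l /negPf H; rewrite mxE H andbF mul0r.
Qed.

Lemma delta_sandwich_E m n p o (A : 'M[K]_(m,n)) (B : 'M[K]_(p, o)) k j r s :
  (A *m delta_mx k j *m B) r s = A r k * B j s.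
Proof.
rewrite mxE (bigD1 j) //= big1 ?addr0; first by rewrite mul_mx_delta_E eqxx mulr1.
by move=> l /negPf H; rewrite mul_mx_delta_E eq_sym H mulr0 mul0r.
Qed.

Lemma mxDE m n (A B : 'M[K]_(m,n)) a b : (A + B) a b = A a b + B a b.
Proof. by rewrite mxE. Qed.
Lemma mxNE m n (A : 'M[K]_(m,n)) a b : (- A) a b = - A a b.
Proof. by rewrite mxE. Qed.
Lemma mxZE m n (A : 'M[K]_(m,n)) c a b : (c *: A) a b = c * A a b.
Proof. by rewrite mxE. Qed.

Lemma sherman n (Z0 : 'M[K]_n) k j w : Z0 \in unitmx ->
  1 + w * invmx Z0 j k != 0 ->
  invmx (Z0 + w *: delta_mx k j) =
  invmx Z0 - (w / (1 + w * invmx Z0 j k)) *: (invmx Z0 *m delta_mx k j *m invmx Z0).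
Proof.
move=> U nz; set M := invmx Z0; set s := w / _; set N := M - _.
have dMd : delta_mx k j *m M *m delta_mx k j = M j k *: delta_mx k j.
  apply/matrixP => r t; rewrite mul_mx_delta_E mul_delta_mx_E !mxE [j == t]eq_sym.
  by case: (r == k); case: (t == j); rewrite /= ?mul1r ?mul0r ?mulr1 ?mulr0.
have E : (Z0 + w *: delta_mx k j) *m N = 1%:M.
  rewrite /N mulmxDl !mulmxBr mulmxV // -!scalemxAr -!scalemxAl !mulmxA mulmxV // mul1mx.
  rewrite dMd -scalemxAl !scalerA.
  set D := delta_mx k j *m M.
  have -> : w *: D - (s * w * M j k) *: D = s *: D.
    rewrite -scalerBl; congr (_ *: _).
    rewrite /s; field; exact: nz.
  by rewrite addrNK.
have [U1 _] := mulmx1_unit E.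
by rewrite -[LHS]mulmx1 -E mulmxA mulVmx // mul1mx.
Qed.
End Mx.
Local Open Scope classical_set_scope.
Lemma phistar_line (R : realType) p q (Z : 'M[R[i]]_(p+q,p)) a b i j :
  Vstar Z -> exists x y pp d : R[i], forall w : R[i], 1 + w * d != 0 ->
   Phistar (Z + w *: delta_mx i j) a b = x + w * y + w * pp * (1 + w * d)^-1.
Proof.
move=> [_ dZ].
have U : usubmx Z \in unitmx by rewrite unitmxE unitfE.
set M := invmx (usubmx Z).
case: (splitP i) => k Hk.
  have -> : i = lshift q k by apply: val_inj.
  exists ((dsubmx Z *m M) a b), 0, (- ((dsubmx Z *m M) a k * M j b)), (M j k) => w nz.
  rewrite /Phistar -[Z in Z + _]vsubmxK delta_mx_ushift scale_col_mx scaler0 add_col_mx addr0 col_mxKu col_mxKd.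
  rewrite sherman // -/M mulmxBr -scalemxAr.
  rewrite mxDE mxNE mxZE !mulmxA delta_sandwich_E.
  field; exact: nz.
have -> : i = rshift p k by apply: val_inj.
exists ((dsubmx Z *m M) a b), ((a == k)%:R * M j b), 0, 0 => w nz.
rewrite /Phistar -[Z in Z + _]vsubmxK delta_mx_dshift scale_col_mx scaler0 add_col_mx addr0 col_mxKu col_mxKd.
rewrite -/M mulmxDl -scalemxAl mxDE mxZE mul_delta_mx_E.
by rewrite !mulr0 mul0r addr0.
Qed.

Lemma small_nz (R : realType) (cd : R[i]) :
  exists2 r : R, 0 < r & forall t : R, `|t| < r -> 1 + t%:C * cd != 0.
Proof.
set k := complex.Re cd.
have hk : 0 < 1 + `|k| by rewrite ltr_pwDl.
exists (1 + `|k|)^-1; first by rewrite invr_gt0.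
move=> t ht; apply/negP => /eqP E.
have E2 : t * k = -1.
  have := congr1 (@complex.Re R) E; rewrite ReD ReM /= mul0r subr0 => E3.
  by apply/eqP; rewrite -(subr_eq0) opprK addrC E3.
have H1 : `|t| * (1 + `|k|) < 1.
  by rewrite -ltr_pdivlMr // div1r.
have H2 : `|t| * `|k| = 1 by rewrite -normrM E2 normrN normr1.
have H3 : 0 <= `|t| by [].
nra.
Qed.

Lemma comp_dir (R : realType) p q (Z : 'M[R[i]]_(p+q,p)) a b i j :
  Vstar Z -> exists y e : R[i], forall bb : bool,
   [/\ cderivable (fun Z => Phistar Z a b) (onb R i j bb) Z,
       cdir (fun Z => Phistar Z a b) (onb R i j bb) Z = (if bb then 'i else 1) * y,
       cderivable (cdir (fun Z => Phistar Z a b) (onb R i j bb)) (onb R i j bb) Z &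
       cdir (cdir (fun Z => Phistar Z a b) (onb R i j bb)) (onb R i j bb) Z = (if bb then 'i else 1) ^+ 2 * e].
Proof.
move=> VZ; have [x [y [pp [d H]]]] := phistar_line a b i j VZ.
exists (y + pp), (- (2 * pp * d)) => bb.
set c := (if bb then 'i else 1).
have [r r0 Hr] := small_nz (c * d).
have E : forall t : R, `|t| < r -> Phistar (Z + t%:C *: onb R i j bb) a b = Gf c x y pp d t.
  move=> t ht; rewrite /onb scalerA H; first by [].
  by rewrite -mulrA; apply: Hr.
have D1 : forall t, `|t| < r -> HasD (Gf c x y pp d) t (G1f c y pp d t).
  move=> t ht; apply: HasD_G; rewrite -mulrA; exact: Hr.
have [K1 K2 K3 K4] := line_lemma (phi := fun Z => Phistar Z a b) E D1 (HasD_G1 c y pp d) r0.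
split => //.
  rewrite K2 /G1f (_ : (0:R)%:C = 0) // !mul0r addr0 invr1 !mulr1; ring.
rewrite K4 mulrN; congr (- _).
by rewrite [in RHS]mulrA [in RHS]mulrA (mulrC (c ^+ 2)).
Qed.

Theorem proposition8p1 (R : realType) (p q : nat) (hp : (0 < p)%N) (hq : (0 < q)%N) :
  orthogonal_harmonic_family (@Vstar R p q) (@Phistar_components R p q) /\
  (forall phi, @Phistar_components R p q phi -> @GL_invariant R p q (@Vstar R p q) phi).
Proof.
have hi : ('i : R[i]) * 'i = -1 by rewrite -expr2 sqr_i.
split; first split.
- move=> phi [a [b ->]] Z VZ; split.
    move=> i j bb; have [y [e H]] := comp_dir a b i j VZ.
    by case: (H bb) => K1 _ K3 _.
  rewrite /tau; apply: big1 => i _; apply: big1 => j _.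
  have [y [e H]] := comp_dir a b i j VZ.
  rewrite (eq_bigr (fun bb : bool => (if bb then 'i else 1) ^+ 2 * e)); last first.
    by move=> bb _; case: (H bb) => _ _ _ ->.
  by rewrite big_bool /= sqr_i expr1n mulN1r mul1r addNr.
- move=> phi psi [a [b ->]] [a' [b' ->]] Z VZ; split.
    move=> i j bb; have [y [e H]] := comp_dir a b i j VZ.
    have [y' [e' H']] := comp_dir a' b' i j VZ.
    by case: (H bb) => K1 _ _ _; case: (H' bb) => K1' _ _ _.
  rewrite /kappa; apply: big1 => i _; apply: big1 => j _.
  have [y [e H]] := comp_dir a b i j VZ.
  have [y' [e' H']] := comp_dir a' b' i j VZ.
  rewrite (eq_bigr (fun bb : bool => ((if bb then 'i else 1) * y) * ((if bb then 'i else 1) * y'))); last first.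
    by move=> bb _; case: (H bb) => _ -> _ _; case: (H' bb) => _ -> _ _.
  by rewrite big_bool /= mulrACA hi !mul1r mulN1r addNr.
- move=> phi [a [b ->]] Z g [_ dZ] Ug.
  have U : usubmx Z \in unitmx by rewrite unitmxE unitfE.
  rewrite /Phistar -{1 2}[Z]vsubmxK mul_col_mx col_mxKu col_mxKd.
  have U2 : usubmx Z *m g \in unitmx by rewrite unitmx_mul U Ug.
  set N := invmx (usubmx Z *m g).
  have E : usubmx Z *m (g *m N) = 1%:M by rewrite mulmxA mulmxV.
  rewrite -mulmxA.
  have -> // : g *m N = invmx (usubmx Z).
  by rewrite -[g *m N]mul1mx -(mulVmx U) -mulmxA E mulmx1.
Qed.
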